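(* Let $b>0$ and $\beta>0$. Let $\alpha(\theta)=\frac{1-\cos\theta}{\theta-\sin\theta}$ for $\theta\in(0,2\pi)$, let $\tilde\theta\in(0,2\pi)$ be the unique number with $\alpha(\tilde\theta)=\beta/b$, and let $k=\frac{2\beta}{1-\cos\tilde\theta}$. Let $\gamma_0:[0,b]\to\mathbb{R}$ be the function whose graph is the curve $\theta\mapsto\left(\frac{k}{2}(\theta-\sin\theta),\ \frac{k}{2}(1-\cos\theta)\right)$, $\theta\in[0,\tilde\theta]$, and let $\delta_0=(2\gamma_0)^{1/2}$. Let $Y$ be the set of all $\delta\in C([0,b])$ which are continuously differentiable on $(0,b]$, with $\delta(t)>0$ for $t\in(0,b]$, $\delta(0)=0$, $\delta(b)=(2\beta)^{1/2}$, and such that the improper integral $$\mathcal{M}(\delta)=\int_0^b\left(\delta(t)^{-2}+\delta'(t)^2\right)^{1/2}dt$$ is defined (finite). Then $\delta_0$ is the unique minimum of $\mathcal{M}$ on $Y$.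
   Context: The function $\alpha$ is a strictly decreasing bijection from $(0,2\pi)$ onto $(0,\infty)$, so $\tilde\theta$ is well defined; with this choice of $k$, the curve starts at $(0,0)$ and ends at $(b,\beta)$, and $\theta\mapsto\frac{k}{2}(\theta-\sin\theta)$ is strictly increasing, so the curve is the graph of a function on $[0,b]$. *)

(* Defs.v *)
From Stdlib Require Import Reals.
From Coquelicot Require Import Coquelicot.
Open Scope R_scope.

Definition alpha (th : R) : R := (1 - cos th) / (th - sin th).

Definition M_integrand (delta : R -> R) (t : R) : R :=
  sqrt (/ (delta t ^ 2) + (Derive delta t) ^ 2).

Definition M_defined (b : R) (delta : R -> R) : Prop :=
  ex_RInt_gen (M_integrand delta) (at_right 0) (at_point b).

Definition M (b : R) (delta : R -> R) : R :=
  RInt_gen (M_integrand delta) (at_right 0) (at_point b).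

Definition cont_on_0b (b : R) (delta : R -> R) : Prop :=
  forall t, 0 <= t <= b ->
    filterlim delta (within (fun x => 0 <= x <= b) (locally t)) (locally (delta t)).

Definition C1_on_0b_right (b : R) (delta : R -> R) : Prop :=
  exists d : R -> R,
    (forall t, 0 < t < b -> is_derive delta t (d t)) /\
    filterlim (fun h => (delta (b + h) - delta b) / h) (at_left 0) (locally (d b)) /\
    (forall t, 0 < t <= b ->
       filterlim d (within (fun x => 0 < x <= b) (locally t)) (locally (d t))).

Definition inY (b beta : R) (delta : R -> R) : Prop :=
  cont_on_0b b delta /\
  C1_on_0b_right b delta /\
  (forall t, 0 < t <= b -> 0 < delta t) /\
  delta 0 = 0 /\
  delta b = sqrt (2 * beta) /\
  M_defined b delta.

(* Main.v *)
Require Import Defs.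
From Stdlib Require Import Reals.
From Coquelicot Require Import Coquelicot.
From Stdlib Require Import Lra Psatz ClassicalEpsilon Ranalysis5.
Open Scope R_scope.

Definition Xf (k th : R) := k/2*(th - sin th).

Lemma sin_diff_lt a b : a < b -> sin b - sin a < b - a.
Proof.
  intros Hab.
  assert (E : sin b - sin a = 2 * cos ((b + a)/2) * sin ((b - a)/2)).
  { replace (sin b - sin a) with (sin b + sin (-a)) by (rewrite sin_neg; ring).
    rewrite form3. replace ((b - - a)/2) with ((b+a)/2) by field.
    replace ((b + - a)/2) with ((b - a)/2) by field. reflexivity. }
  rewrite E. set (h := (b-a)/2). assert (hp : 0 < h) by (unfold h; lra).
  replace (b - a) with (2*h) by (unfold h; field).
  pose proof (COS_bound ((b+a)/2)) as [C1 C2].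
  pose proof (SIN_bound h) as [S1 S2].
  pose proof (sin_lt_x h hp).
  destruct (Rle_or_lt 0 (sin h)) as [Hs|Hs].
  - nra.
  - assert (1 < h).
    { destruct (Rle_or_lt h 1) as [H1|H1]; auto.
      assert (0 < sin h). { apply sin_gt_0; auto. pose proof PI2_3_2. lra. } lra. }
    nra.
Qed.

Lemma Xf_incr k a b : 0 < k -> a < b -> Xf k a < Xf k b.
Proof. intros hk hab. unfold Xf. pose proof (sin_diff_lt a b hab). nra. Qed.

Lemma Xf_deriv k th : is_derive (Xf k) th (k/2*(1 - cos th)).
Proof. unfold Xf. auto_derive; auto. ring. Qed.

Lemma Xf_cont k th : continuous (Xf k) th.
Proof. apply (ex_derive_continuous (V:=R_NormedModule) (Xf k)). eexists. apply Xf_deriv. Qed.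

Lemma Xf_surj k t : 0 < k -> exists th, Xf k th = t.
Proof.
  intros hk. set (A := 2*Rabs t/k + 1).
  assert (HA : Xf k (-A) <= t <= Xf k A).
  { unfold Xf, A. pose proof (SIN_bound (- (2 * Rabs t / k + 1))).
    pose proof (SIN_bound ((2 * Rabs t / k + 1))).
    pose proof (Rle_abs t). pose proof (Rabs_pos t).
    assert (E: k/2 * (2*Rabs t/k) = Rabs t) by (field; lra).
    split.
    - assert (t >= - Rabs t) by (pose proof (Rle_abs (-t)); rewrite Rabs_Ropp in *; lra). nra.
    - nra. }
  destruct (IVT_gen_consistent (Xf k) (-A) A t (Xf_cont k)) as [x [_ Hx]].
  - rewrite Rmin_left, Rmax_right; lra.
  - eauto.
Qed.

Definition theta (k t : R) : R := epsilon (inhabits 0) (fun th => Xf k th = t).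

Lemma Xf_theta k t : 0 < k -> Xf k (theta k t) = t.
Proof. intros hk. unfold theta. apply epsilon_spec. apply Xf_surj; auto. Qed.

Lemma Xf_inj k a b : 0 < k -> Xf k a = Xf k b -> a = b.
Proof.
  intros hk E. destruct (Rtotal_order a b) as [H|[H|H]]; auto.
  - pose proof (Xf_incr k a b hk H). lra.
  - pose proof (Xf_incr k b a hk H). lra.
Qed.

Lemma theta_Xf k th : 0 < k -> theta k (Xf k th) = th.
Proof. intros hk. apply (Xf_inj k); auto. apply Xf_theta; auto. Qed.

Lemma theta_le k x y : 0 < k -> x <= y -> theta k x <= theta k y.
Proof.
  intros hk H. destruct (Rle_or_lt (theta k x) (theta k y)) as [H1|H1]; auto.
  pose proof (Xf_incr k _ _ hk H1). rewrite !Xf_theta in H0; lra.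
Qed.

Lemma theta_lt k x y : 0 < k -> x < y -> theta k x < theta k y.
Proof.
  intros hk H. destruct (Rle_or_lt (theta k y) (theta k x)) as [H1|H1]; auto.
  destruct H1 as [H1|H1].
  - pose proof (Xf_incr k _ _ hk H1). rewrite !Xf_theta in H0; lra.
  - assert (Xf k (theta k y) = Xf k (theta k x)) by (rewrite H1; auto).
    rewrite !Xf_theta in H0; lra.
Qed.

Lemma theta_cont k t : 0 < k -> continuity_pt (theta k) t.
Proof.
  intros hk.
  set (lb := theta k t - 1). set (ub := theta k t + 1).
  assert (Hf : Xf k lb < t < Xf k ub).
  { pose proof (Xf_theta k t hk) as E. split.
    - apply Rlt_le_trans with (Xf k (theta k t)); [apply Xf_incr; unfold lb; lra | lra].
    - apply Rle_lt_trans with (Xf k (theta k t)); [lra | apply Xf_incr; unfold ub; lra]. }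
  apply (continuity_pt_recip_interv (Xf k) (theta k) lb ub); [unfold lb, ub; lra | | | | | exact Hf].
  - intros; apply Xf_incr; auto; lra.
  - intros; unfold comp, id; apply Xf_theta; auto.
  - intros x H1 H2. rewrite <- (theta_Xf k lb hk), <- (theta_Xf k ub hk).
    split; apply theta_le; auto.
  - intros a _. apply continuity_pt_filterlim. apply Xf_cont.
Qed.

Lemma theta_deriv k t : 0 < k -> cos (theta k t) <> 1 ->
  is_derive (theta k) t (2/(k*(1 - cos (theta k t)))).
Proof.
  intros hk hc.
  assert (Prf : forall a, theta k (t-1) <= a <= theta k (t+1) -> derivable_pt (Xf k) a).
  { intros a _. exists (k/2*(1-cos a)). apply is_derive_Reals, Xf_deriv. }
  assert (Pi : theta k (t-1) <= theta k t <= theta k (t+1)).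
  { split; apply theta_le; auto; lra. }
  assert (D : derive_pt (Xf k) (theta k t) (Prf _ Pi) = k/2*(1 - cos (theta k t))).
  { apply derive_pt_eq_0. apply is_derive_Reals, Xf_deriv. }
  pose proof (derivable_pt_lim_recip_interv (Xf k) (theta k) (t-1) (t+1) t Prf
    (theta_cont k t hk) ltac:(lra) ltac:(lra) Pi) as H.
  apply is_derive_Reals. rewrite D in H.
  replace (2 / (k * (1 - cos (theta k t)))) with (1 / (k / 2 * (1 - cos (theta k t)))).
  - apply H.
    + intros; unfold comp, id; apply Xf_theta; auto.
    + intro E. apply Rmult_integral in E. destruct E; lra.
  - field. split; lra.
Qed.


Lemma ball_R2 (x : R) (e : posreal) (y : R) : ball x e y -> y - x < e /\ - e < y - x.
Proof. intros H. apply Rabs_def2. exact H. Qed.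

Lemma within_interior (D P : R -> Prop) t :
  locally t D -> within D (locally t) P -> locally t P.
Proof.
  intros HD HW. unfold within in HW.
  generalize (filter_and _ _ HD HW). apply filter_imp. intros x [H1 H2]; auto.
Qed.

Lemma ev_ex (F : (R -> Prop) -> Prop) (FF : ProperFilter F) P : F P -> exists x, P x.
Proof. intros H. destruct FF as [Hex _]. apply Hex; auto. Qed.

Lemma lim_le_ev (F : (R -> Prop) -> Prop) (FF : ProperFilter F) h l0 L :
  filterlim h F (locally l0) -> F (fun x => h x <= L) -> l0 <= L.
Proof.
  intros Hl Hev. destruct (Rle_or_lt l0 L) as [H|H]; auto. exfalso.
  assert (ep : 0 < l0 - L) by lra.
  pose proof (proj1 (filterlim_locally h l0) Hl (mkposreal _ ep)) as Hb.
  destruct (ev_ex F FF _ (filter_and _ _ Hb Hev)) as [x [H1 H2]].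
  apply ball_R2 in H1. cbn [pos] in H1. destruct H1; lra.
Qed.

Lemma lim_ge_ev (F : (R -> Prop) -> Prop) (FF : ProperFilter F) h l0 L :
  filterlim h F (locally l0) -> F (fun x => L <= h x) -> L <= l0.
Proof.
  intros Hl Hev. destruct (Rle_or_lt L l0) as [H|H]; auto. exfalso.
  assert (ep : 0 < L - l0) by lra.
  pose proof (proj1 (filterlim_locally h l0) Hl (mkposreal _ ep)) as Hb.
  destruct (ev_ex F FF _ (filter_and _ _ Hb Hev)) as [x [H1 H2]].
  apply ball_R2 in H1. cbn [pos] in H1. destruct H1; lra.
Qed.

Lemma at_left_ev b a : a < b -> at_left b (fun x => a < x < b).
Proof.
  intros H. unfold at_left, within. exists (mkposreal _ (Rlt_Rminus _ _ H)).
  intros y Hy Hyb. apply ball_R2 in Hy. cbn [pos] in Hy. destruct Hy; lra.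
Qed.

Lemma at_right_ev a b : a < b -> at_right a (fun x => a < x < b).
Proof.
  intros H. unfold at_right, within. exists (mkposreal _ (Rlt_Rminus _ _ H)).
  intros y Hy Hyb. apply ball_R2 in Hy. cbn [pos] in Hy. destruct Hy; lra.
Qed.

Lemma gen_lb f b l e0 (Q : R -> R) q :
  is_RInt_gen f (at_right 0) (at_point b) l -> 0 < e0 ->
  (forall eps y, 0 < eps < e0 -> is_RInt f eps b y -> Q eps <= y) ->
  filterlim Q (at_right 0) (locally q) -> q <= l.
Proof.
  intros Hg He0 HQ Hq.
  destruct (Rle_or_lt q l) as [H|H]; auto. exfalso.
  assert (ep : 0 < (q - l)/2) by lra.
  pose proof (Hg (ball l (mkposreal _ ep)) (locally_ball _ _)) as Hp.
  destruct Hp as [Q1 R1 HQ1 HR1 Hall]. unfold at_point in HR1.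
  pose proof (proj1 (filterlim_locally Q q) Hq (mkposreal _ ep)) as Hb.
  destruct (ev_ex _ (at_right_proper_filter 0) _
     (filter_and _ _ (filter_and _ _ Hb HQ1) (at_right_ev 0 e0 He0))) as [x [[H1 H2] H3]].
  destruct (Hall x b H2 HR1) as [y [Hy1 Hy2]]. simpl in Hy1.
  pose proof (HQ x y H3 Hy1).
  apply ball_R2 in H1. apply ball_R2 in Hy2. cbn [pos] in H1, Hy2.
  destruct H1, Hy2; lra.
Qed.

Lemma gen_eval f b (H : R -> R) W :
  0 < b -> (forall eps, 0 < eps < b -> is_RInt f eps b (H eps)) ->
  filterlim H (at_right 0) (locally W) ->
  is_RInt_gen f (at_right 0) (at_point b) W.
Proof.
  intros hb Hi Hl P HP.
  apply (Filter_prod _ _ _ (fun x => (0 < x < b) /\ P (H x)) (fun y => y = b)).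
  - apply filter_and. apply at_right_ev; auto. apply Hl. auto.
  - reflexivity.
  - intros x y [Hx Hp] ->. exists (H x). split; [simpl; apply Hi; auto | auto].
Qed.


Lemma sqrt_ge_lin a p s c : s^2 + c^2 = 1 -> s*a + c*p <= sqrt (a^2 + p^2).
Proof.
  intros H. set (y := s*a + c*p).
  apply Rle_trans with (Rabs y). apply Rle_abs.
  rewrite <- sqrt_Rsqr_abs. apply sqrt_le_1_alt. unfold Rsqr, y.
  assert (E: a^2 + p^2 = (s^2+c^2)*(a^2+p^2)) by (rewrite H; ring).
  rewrite E.
  assert (E2 : (s^2+c^2)*(a^2+p^2) = (s*a+c*p)*(s*a+c*p) + (s*p-c*a)^2) by ring.
  pose proof (pow2_ge_0 (s*p-c*a)). lra.
Qed.

Lemma key_ineq u p s c m : 0 < u -> 0 < s -> 0 < m -> s^2 + c^2 = 1 ->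
  2/m - u/(m^2*s) + c*p + (m*s-u)^2/(u*m^2*s) <= sqrt (/(u^2) + p^2).
Proof.
  intros hu hs hm H.
  replace (/(u^2)) with ((/u)^2) by (field; lra).
  replace (2/m - u/(m^2*s) + c*p + (m*s-u)^2/(u*m^2*s)) with (s*(/u) + c*p) by (field; repeat split; lra).
  apply sqrt_ge_lin; auto.
Qed.

Lemma key_eq u p s c m : 0 < s -> 0 < m -> s^2 + c^2 = 1 -> u = m*s -> p = c/(m*s^2) ->
  sqrt (/(u^2) + p^2) = 1/(m*s^2).
Proof.
  intros hs hm H -> ->.
  assert (0 < m*s^2) by (apply Rmult_lt_0_compat; [lra | apply pow_lt; lra]).
  replace (/((m*s)^2) + (c/(m*s^2))^2) with ((1/(m*s^2))^2).
  - apply sqrt_pow2. apply Rlt_le. apply Rdiv_lt_0_compat; lra.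
  - field_simplify; try (split; lra). rewrite H. reflexivity.
Qed.


Definition mm k := sqrt (2*k).
Definition ss k t := sin (theta k t / 2).
Definition cc k t := cos (theta k t / 2).
Definition Gf k t := mm k * ss k t.
Definition dth k t := 1/(k * ss k t ^2).
Definition dcc k t := -(1/(mm k ^2 * ss k t)).
Definition dG k t := cc k t / (mm k * ss k t ^2).

Definition good k t := 0 < theta k t < 2*PI.

Lemma mm_pos k : 0 < k -> 0 < mm k.
Proof. intros. unfold mm. apply sqrt_lt_R0. lra. Qed.

Lemma mm_sq k : 0 < k -> mm k ^2 = 2*k.
Proof. intros. unfold mm. rewrite pow2_sqrt; lra. Qed.

Lemma theta_0 k : 0 < k -> theta k 0 = 0.
Proof. intros hk. replace 0 with (Xf k 0) at 1 by (unfold Xf; rewrite sin_0; ring). apply theta_Xf; auto. Qed.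

Lemma ss_pos k t : good k t -> 0 < ss k t.
Proof. intros [h1 h2]. unfold ss. apply sin_gt_0; lra. Qed.

Lemma ss_cc k t : ss k t ^2 + cc k t ^2 = 1.
Proof. unfold ss, cc. pose proof (sin2_cos2 (theta k t / 2)). unfold Rsqr in H. lra. Qed.

Lemma one_m_cos k t : 1 - cos (theta k t) = 2 * ss k t ^2.
Proof. unfold ss. replace (theta k t) with (2 * (theta k t / 2)) at 1 by field.
  rewrite cos_2a_sin. ring. Qed.

Lemma theta_deriv' k t : 0 < k -> good k t -> is_derive (theta k) t (dth k t).
Proof.
  intros hk hg. pose proof (ss_pos k t hg).
  assert (cos (theta k t) <> 1). { pose proof (one_m_cos k t). nra. }
  pose proof (theta_deriv k t hk H0) as D.
  unfold dth. rewrite one_m_cos in D.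
  replace (1 / (k * ss k t ^ 2)) with (2 / (k * (2 * ss k t ^ 2))) by (field; lra). exact D.
Qed.

Lemma theta_ex_derive k t : 0 < k -> good k t -> ex_derive (theta k) t.
Proof. intros. eexists. apply theta_deriv'; auto. Qed.

Lemma cc_deriv k t : 0 < k -> good k t -> is_derive (cc k) t (dcc k t).
Proof.
  intros hk hg. pose proof (ss_pos k t hg). pose proof (theta_deriv' k t hk hg) as D.
  unfold cc, dcc. auto_derive.
  - apply theta_ex_derive; auto.
  - change (Derive (fun x : R => theta k x) t) with (Derive (theta k) t).
    rewrite (is_derive_unique _ _ _ D). rewrite mm_sq; auto. unfold dth.
    unfold ss. replace (theta k t * / 2) with (theta k t / 2) by field. fold (ss k t).
    field. split; lra.
Qed.

Lemma Gf_deriv k t : 0 < k -> good k t -> is_derive (Gf k) t (dG k t).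
Proof.
  intros hk hg. pose proof (ss_pos k t hg). pose proof (theta_deriv' k t hk hg) as D.
  pose proof (mm_pos k hk). pose proof (mm_sq k hk).
  unfold Gf, dG, ss. auto_derive.
  - apply theta_ex_derive; auto.
  - change (Derive (fun x : R => theta k x) t) with (Derive (theta k) t).
    rewrite (is_derive_unique _ _ _ D). unfold dth.
    replace (theta k t * / 2) with (theta k t / 2) by field. fold (ss k t). fold (cc k t).
    assert (Ek : k = mm k ^2/2) by lra.
    set (m := mm k) in *. set (s := ss k t) in *. set (c := cc k t) in *.
    clearbody m s c. rewrite Ek.
    field. split; lra.
Qed.

Lemma dth_cont k t : 0 < k -> good k t -> continuous (dth k) t.
Proof.
  intros hk hg. pose proof (ss_pos k t hg). apply (ex_derive_continuous (V:=R_NormedModule)).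
  unfold dth, ss. auto_derive. repeat split.
  - apply theta_ex_derive; auto.
  - replace (theta k t * /2) with (theta k t / 2) by field. fold (ss k t).
    apply Rgt_not_eq. repeat apply Rmult_lt_0_compat; lra.
Qed.

Lemma dcc_cont k t : 0 < k -> good k t -> continuous (dcc k) t.
Proof.
  intros hk hg. pose proof (ss_pos k t hg). pose proof (mm_pos k hk). apply (ex_derive_continuous (V:=R_NormedModule)).
  unfold dcc, ss. auto_derive. repeat split.
  - apply theta_ex_derive; auto.
  - replace (theta k t * /2) with (theta k t / 2) by field. fold (ss k t).
    apply Rgt_not_eq. repeat apply Rmult_lt_0_compat; lra.
Qed.

Lemma dG_cont k t : 0 < k -> good k t -> continuous (dG k) t.
Proof.
  intros hk hg. pose proof (ss_pos k t hg). pose proof (mm_pos k hk). apply (ex_derive_continuous (V:=R_NormedModule)).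
  unfold dG, ss, cc. auto_derive. repeat split.
  - apply theta_ex_derive; auto.
  - apply theta_ex_derive; auto.
  - replace (theta k t * /2) with (theta k t / 2) by field. fold (ss k t).
    apply Rgt_not_eq. repeat apply Rmult_lt_0_compat; lra.
Qed.

Lemma cc_cont k t : 0 < k -> good k t -> continuous (cc k) t.
Proof. intros. apply (ex_derive_continuous (V:=R_NormedModule)). eexists. apply cc_deriv; auto. Qed.

Lemma Gf_cont k t : 0 < k -> good k t -> continuous (Gf k) t.
Proof. intros. apply (ex_derive_continuous (V:=R_NormedModule)). eexists. apply Gf_deriv; auto. Qed.


Lemma lim_mult {T} (F : (T -> Prop) -> Prop) {FF : Filter F} (f g : T -> R) a c :
  filterlim f F (locally a) -> filterlim g F (locally c) ->
  filterlim (fun x => f x * g x) F (locally (a * c)).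
Proof.
  intros Hf Hg. apply (filterlim_comp_2 f g Rmult Hf Hg).
  apply (filterlim_mult (K:=R_AbsRing) a c).
Qed.

Lemma lim_plus {T} (F : (T -> Prop) -> Prop) {FF : Filter F} (f g : T -> R) a c :
  filterlim f F (locally a) -> filterlim g F (locally c) ->
  filterlim (fun x => f x + g x) F (locally (a + c)).
Proof.
  intros Hf Hg. apply (filterlim_comp_2 f g Rplus Hf Hg).
  apply (filterlim_plus (V:=R_NormedModule) a c).
Qed.

Lemma le_at_right0 (D : R -> Prop) b :
  0 < b -> (forall x, 0 < x < b -> D x) ->
  filter_le (at_right 0) (within D (locally (T:=R_UniformSpace) 0)).
Proof.
  intros hb HD P HP. unfold at_right, within in *.
  assert (Hl : locally 0 (fun x => x < b)).
  { exists (mkposreal _ hb). intros y Hy. apply ball_R2 in Hy. cbn [pos] in Hy. destruct Hy; lra. }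
  generalize (filter_and _ _ Hl HP). apply filter_imp. intros x [H1 H2] H3. apply H2, HD; lra.
Qed.

Lemma le_at_left (D : R -> Prop) a b :
  a < b -> (forall x, a < x < b -> D x) ->
  filter_le (at_left b) (within D (locally (T:=R_UniformSpace) b)).
Proof.
  intros hb HD P HP. unfold at_left, within in *.
  assert (Hl : locally b (fun x => a < x)).
  { exists (mkposreal _ (Rlt_Rminus _ _ hb)). intros y Hy. apply ball_R2 in Hy. cbn [pos] in Hy. destruct Hy; lra. }
  generalize (filter_and _ _ Hl HP). apply filter_imp. intros x [H1 H2] H3. apply H2, HD; lra.
Qed.

Lemma cont_within (D : R -> Prop) (f : R -> R) (t : R) : continuous f t ->
  filterlim f (within D (locally t)) (locally (f t)).
Proof. intros H. eapply filterlim_filter_le_1. apply filter_le_within. exact H. Qed.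

Lemma theta_continuous k t : 0 < k -> continuous (theta k) t.
Proof. intros. apply continuity_pt_filterlim. apply theta_cont; auto. Qed.

Lemma cc_cont_all k t : 0 < k -> continuous (cc k) t.
Proof.
  intros hk. unfold cc. apply (continuous_comp (fun x => theta k x / 2) cos).
  - apply (continuous_mult (K:=R_AbsRing) (theta k) (fun _ => /2)).
    apply theta_continuous; auto. apply continuous_const.
  - apply continuity_pt_filterlim. apply continuity_cos.
Qed.

Lemma Gf_cont_all k t : 0 < k -> continuous (Gf k) t.
Proof.
  intros hk. unfold Gf, ss. apply (continuous_mult (K:=R_AbsRing) (fun _ => mm k)).
  apply continuous_const.
  apply (continuous_comp (fun x => theta k x / 2) sin).
  - apply (continuous_mult (K:=R_AbsRing) (theta k) (fun _ => /2)).
    apply theta_continuous; auto. apply continuous_const.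
  - apply continuity_pt_filterlim. apply continuity_sin.
Qed.

Lemma cont_eps (f : R -> R) (t : R) : continuous f t -> forall eps, 0 < eps ->
  exists r, 0 < r /\ forall x, Rabs (x - t) < r -> Rabs (f x - f t) < eps.
Proof.
  intros H eps he. pose proof (proj1 (filterlim_locally f (f t)) H (mkposreal _ he)) as [r Hr].
  exists r. split. apply cond_pos. intros x Hx.
  specialize (Hr x Hx). apply Rabs_def1; apply ball_R2 in Hr; cbn [pos] in Hr; destruct Hr; lra.
Qed.


Definition Pf k (delta : R -> R) t := 2*t/mm k + cc k t * delta t.
Definition gfun k (delta d : R -> R) t := 2/mm k + dcc k t * delta t + cc k t * d t.
Definition gap k (delta : R -> R) t := (mm k * ss k t - delta t)^2/(delta t * mm k^2 * ss k t).

Lemma Pf_deriv k (delta d : R -> R) x : 0 < k -> good k x -> is_derive delta x (d x) ->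
  is_derive (Pf k delta) x (gfun k delta d x).
Proof.
  intros hk hg HD. pose proof (mm_pos k hk).
  assert (D1 : is_derive (fun t => 2*t/mm k) x (2/mm k)).
  { auto_derive; auto. field. lra. }
  pose proof (is_derive_mult (cc k) delta x _ _ (cc_deriv k x hk hg) HD ltac:(intros; apply Rmult_comm)) as D2.
  pose proof (is_derive_plus _ _ _ _ _ D1 D2) as D3.
  assert (E: gfun k delta d x = 2/mm k + (dcc k x * delta x + cc k x * d x)) by (unfold gfun; ring).
  rewrite E. unfold Pf. eapply is_derive_ext; [| apply D3]. intros t. reflexivity.
Qed.

Lemma delta_cont (delta : R -> R) x l : is_derive delta x l -> continuous delta x.
Proof. intros H. apply (ex_derive_continuous (V:=R_NormedModule)). exists l; auto. Qed.

Lemma gfun_cont k (delta d : R -> R) x : 0 < k -> good k x -> is_derive delta x (d x) ->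
  continuous d x -> continuous (gfun k delta d) x.
Proof.
  intros hk hg HD Hd. unfold gfun.
  apply (continuous_plus (V:=R_NormedModule) (fun t => 2/mm k + dcc k t * delta t) (fun t => cc k t * d t)).
  apply (continuous_plus (V:=R_NormedModule) (fun t => 2/mm k) (fun t => dcc k t * delta t)).
  apply continuous_const.
  apply (continuous_mult (K:=R_AbsRing) (dcc k) delta). apply dcc_cont; auto. eapply delta_cont; eauto.
  apply (continuous_mult (K:=R_AbsRing) (cc k) d). apply cc_cont; auto. auto.
Qed.

Lemma piece k (delta d : R -> R) a1 a2 : 0 < k -> a1 <= a2 ->
  (forall x, a1 <= x <= a2 -> good k x /\ is_derive delta x (d x) /\ continuous d x) ->
  is_RInt (gfun k delta d) a1 a2 (Pf k delta a2 - Pf k delta a1).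
Proof.
  intros hk ha H.
  apply (is_RInt_derive (V:=R_CompleteNormedModule) (Pf k delta) (gfun k delta d)).
  - rewrite Rmin_left, Rmax_right; auto. intros x Hx. destruct (H x Hx) as [? [? ?]].
    apply Pf_deriv; auto.
  - rewrite Rmin_left, Rmax_right; auto. intros x Hx. destruct (H x Hx) as [? [? ?]].
    apply gfun_cont; auto.
Qed.

Lemma gap_nonneg k (delta : R -> R) x : 0 < k -> good k x -> 0 < delta x -> 0 <= gap k delta x.
Proof.
  intros hk hg hp. pose proof (ss_pos k x hg). pose proof (mm_pos k hk). unfold gap.
  apply Rdiv_le_0_compat. apply pow2_ge_0.
  apply Rmult_lt_0_compat; [apply Rmult_lt_0_compat|]; auto. apply pow_lt; auto.
Qed.

Lemma pointwise k (delta d : R -> R) x : 0 < k -> good k x -> 0 < delta x -> Derive delta x = d x ->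
  gfun k delta d x + gap k delta x <= M_integrand delta x.
Proof.
  intros hk hg hp HD. pose proof (ss_pos k x hg). pose proof (mm_pos k hk).
  unfold M_integrand. rewrite HD.
  pose proof (key_ineq (delta x) (d x) (ss k x) (cc k x) (mm k) hp H H0 (ss_cc k x)) as K.
  eapply Rle_trans; [| exact K]. right. unfold gfun, gap, dcc. field. repeat split; lra.
Qed.

Definition CHyp k b (delta d : R -> R) :=
  0 < k /\ 0 < b /\ (forall t, 0 < t <= b -> good k t) /\
  (forall t, 0 < t < b -> is_derive delta t (d t) /\ continuous d t /\ 0 < delta t).

Lemma Hyp_piece k b delta d a1 a2 : CHyp k b delta d -> 0 < a1 -> a1 <= a2 -> a2 < b ->
  is_RInt (gfun k delta d) a1 a2 (Pf k delta a2 - Pf k delta a1).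
Proof.
  intros [hk [hb [Hg Hd]]] h1 h2 h3. apply piece; auto.
  intros x Hx. destruct (Hd x ltac:(lra)) as [? [? ?]]. split; [apply Hg; lra | split; auto].
Qed.

Lemma Hyp_pw k b delta d x : CHyp k b delta d -> 0 < x < b ->
  gfun k delta d x + gap k delta x <= M_integrand delta x /\ 0 <= gap k delta x.
Proof.
  intros [hk [hb [Hg Hd]]] hx. destruct (Hd x hx) as [D [C P]].
  split. apply pointwise; auto. apply Hg; lra. apply is_derive_unique; auto.
  apply gap_nonneg; auto. apply Hg; lra.
Qed.

Lemma core k b delta d eps a1 a2 b' eta y : CHyp k b delta d ->
  0 < eps -> eps <= a1 -> a1 <= a2 -> a2 <= b' -> b' < b -> 0 <= eta ->
  (forall x, a1 < x < a2 -> eta <= gap k delta x) ->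
  is_RInt (M_integrand delta) eps b y ->
  Pf k delta b' - Pf k delta eps + eta * (a2 - a1) <= y.
Proof.
  intros HH he h1 h2 h3 h4 heta Hgap Hy.
  set (F := M_integrand delta) in *.
  assert (ex : ex_RInt F eps b) by (exists y; auto).
  assert (e1 : ex_RInt F eps b') by (apply (ex_RInt_Chasles_1 F eps b' b); auto; lra).
  assert (e2 : ex_RInt F b' b) by (apply (ex_RInt_Chasles_2 F eps b' b); auto; lra).
  assert (e3 : ex_RInt F eps a1) by (apply (ex_RInt_Chasles_1 F eps a1 b'); auto; lra).
  assert (e4 : ex_RInt F a1 b') by (apply (ex_RInt_Chasles_2 F eps a1 b'); auto; lra).
  assert (e5 : ex_RInt F a1 a2) by (apply (ex_RInt_Chasles_1 F a1 a2 b'); auto; lra).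
  assert (e6 : ex_RInt F a2 b') by (apply (ex_RInt_Chasles_2 F a1 a2 b'); auto; lra).
  assert (Ey : y = RInt F eps b) by (symmetry; apply is_RInt_unique; auto).
  pose proof (RInt_Chasles F eps b' b e1 e2) as C1.
  pose proof (RInt_Chasles F eps a1 b' e3 e4) as C2.
  pose proof (RInt_Chasles F a1 a2 b' e5 e6) as C3.
  simpl in C1, C2, C3. unfold plus in C1, C2, C3; simpl in C1, C2, C3.
  assert (I0 : 0 <= RInt F b' b).
  { apply RInt_ge_0; auto. lra. intros; unfold F, M_integrand. apply sqrt_pos. }
  assert (I1 : Pf k delta a1 - Pf k delta eps <= RInt F eps a1).
  { apply (is_RInt_le (gfun k delta d) F eps a1); auto.
    apply Hyp_piece with b; auto; lra. apply (RInt_correct (V:=R_CompleteNormedModule)); auto.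
    intros x Hx. destruct (Hyp_pw k b delta d x HH ltac:(lra)). unfold F; lra. }
  assert (I3 : Pf k delta b' - Pf k delta a2 <= RInt F a2 b').
  { apply (is_RInt_le (gfun k delta d) F a2 b'); auto.
    apply Hyp_piece with b; auto; lra. apply (RInt_correct (V:=R_CompleteNormedModule)); auto.
    intros x Hx. destruct (Hyp_pw k b delta d x HH ltac:(lra)). unfold F; lra. }
  assert (I2 : Pf k delta a2 - Pf k delta a1 + eta * (a2 - a1) <= RInt F a1 a2).
  { apply (is_RInt_le (fun x => gfun k delta d x + eta) F a1 a2); auto.
    pose proof (is_RInt_plus _ _ _ _ _ _ (Hyp_piece k b delta d a1 a2 HH ltac:(lra) h2 ltac:(lra))
      (is_RInt_const (V:=R_NormedModule) a1 a2 eta)) as P.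
    replace (Pf k delta a2 - Pf k delta a1 + eta * (a2 - a1)) with
      (plus (Pf k delta a2 - Pf k delta a1) (scal (a2 - a1) eta)).
    exact P. unfold plus, scal; simpl; unfold mult; simpl. ring.
    apply (RInt_correct (V:=R_CompleteNormedModule)); auto.
    intros x Hx. destruct (Hyp_pw k b delta d x HH ltac:(lra)). specialize (Hgap x Hx). unfold F; lra. }
  lra.
Qed.

Lemma lin_cont k t : continuous (fun x : R => 2*x/mm k) t.
Proof.
  apply (continuous_mult (K:=R_AbsRing) (fun x => 2*x) (fun _ => / mm k)).
  apply (continuous_mult (K:=R_AbsRing) (fun _ => 2) (fun x => x)).
  apply continuous_const. apply continuous_id. apply continuous_const.
Qed.

Lemma Pf_lim F {FF : Filter F} k (delta : R -> R) t dl :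
  0 < k -> filter_le F (locally t) -> filterlim delta F (locally dl) ->
  filterlim (Pf k delta) F (locally (2*t/mm k + cc k t * dl)).
Proof.
  intros hk HF Hd. unfold Pf. apply (lim_plus F (fun x => 2*x/mm k) (fun x => cc k x * delta x)).
  - eapply filterlim_filter_le_1. exact HF. apply lin_cont.
  - apply (lim_mult F (cc k) delta); [| exact Hd]. eapply filterlim_filter_le_1. exact HF. apply cc_cont_all; auto.
Qed.

Lemma core2 k b delta d eps a1 a2 eta y : CHyp k b delta d ->
  filterlim delta (within (fun x => 0 <= x <= b) (locally b)) (locally (delta b)) ->
  0 < eps -> eps <= a1 -> a1 <= a2 -> a2 < b -> 0 <= eta ->
  (forall x, a1 < x < a2 -> eta <= gap k delta x) ->
  is_RInt (M_integrand delta) eps b y ->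
  Pf k delta b - Pf k delta eps + eta * (a2 - a1) <= y.
Proof.
  intros HH Hcb he h1 h2 h3 heta Hgap Hy. pose proof HH as [hk [hb _]].
  apply (lim_le_ev (at_left b) (at_left_proper_filter b)
    (fun b' => Pf k delta b' + (- Pf k delta eps + eta * (a2 - a1))) _ y).
  - replace (Pf k delta b - Pf k delta eps + eta * (a2 - a1)) with
      (Pf k delta b + (- Pf k delta eps + eta * (a2 - a1))) by ring.
    apply (lim_plus (at_left b) (Pf k delta) (fun _ => - Pf k delta eps + eta * (a2 - a1))); [| apply filterlim_const].
    apply (Pf_lim (at_left b) k delta b (delta b) hk). apply filter_le_within.
    eapply filterlim_filter_le_1; [| apply Hcb]. apply le_at_left with 0; auto. intros; lra.
  - generalize (at_left_ev b a2 h3). apply filter_imp. intros x Hx.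
    pose proof (core k b delta d eps a1 a2 x eta y HH he h1 h2 ltac:(lra) ltac:(lra) heta Hgap Hy). lra.
Qed.

Lemma main_lb k b delta d l a1 a2 eta : CHyp k b delta d ->
  filterlim delta (within (fun x => 0 <= x <= b) (locally b)) (locally (delta b)) ->
  filterlim delta (within (fun x => 0 <= x <= b) (locally 0)) (locally 0) ->
  0 < a1 -> a1 <= a2 -> a2 < b -> 0 <= eta ->
  (forall x, a1 < x < a2 -> eta <= gap k delta x) ->
  is_RInt_gen (M_integrand delta) (at_right 0) (at_point b) l ->
  Pf k delta b + eta * (a2 - a1) <= l.
Proof.
  intros HH Hcb Hc0 h1 h2 h3 heta Hgap Hl. pose proof HH as [hk [hb _]].
  apply (gen_lb (M_integrand delta) b l a1 (fun e => Pf k delta b + eta * (a2 - a1) - Pf k delta e)); auto.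
  - intros e y He Hy. pose proof (core2 k b delta d e a1 a2 eta y HH Hcb ltac:(lra) ltac:(lra) h2 h3 heta Hgap Hy). lra.
  - replace (Pf k delta b + eta * (a2 - a1)) with (Pf k delta b + eta * (a2 - a1) + - (2*0/mm k + cc k 0 * 0)) at 1 by (field; apply Rgt_not_eq; apply mm_pos; auto).
    apply (lim_plus (at_right 0) (fun _ => Pf k delta b + eta * (a2 - a1)) (fun e => - Pf k delta e)). apply filterlim_const.
    apply (filterlim_comp _ _ _ (Pf k delta) Ropp (at_right 0) (locally (2*0/mm k + cc k 0 * 0))).
    apply (Pf_lim (at_right 0) k delta 0 0 hk). apply filter_le_within.
    eapply filterlim_filter_le_1; [| apply Hc0]. apply le_at_right0 with b; auto. intros; lra.
    apply (filterlim_opp (V:=R_NormedModule)).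
Qed.


Lemma ball_R3 (x : R) (e : posreal) (y : R) : Rabs (y - x) < e -> ball x e y.
Proof. intros H. exact H. Qed.

Lemma loc_interval a c t : a < t < c -> locally t (fun x => a < x < c).
Proof.
  intros H. assert (hp : 0 < Rmin (t - a) (c - t)) by (apply Rmin_glb_lt; lra).
  exists (mkposreal _ hp). intros y Hy. apply ball_R2 in Hy. cbn [pos] in Hy.
  pose proof (Rmin_l (t-a) (c-t)). pose proof (Rmin_r (t-a) (c-t)). destruct Hy; lra.
Qed.

Lemma within_cont (D : R -> Prop) (f : R -> R) t :
  locally t D -> filterlim f (within D (locally t)) (locally (f t)) -> continuous f t.
Proof. intros HD H P HP. apply within_interior with D; auto. apply H; auto. Qed.

Lemma setup b beta tt k : 0 < b -> 0 < beta -> 0 < tt < 2*PI -> alpha tt = beta / b ->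
  k = 2 * beta / (1 - cos tt) -> 0 < k /\ Xf k tt = b.
Proof.
  intros hb hbe htt Ha Hk.
  assert (hs : 0 < sin (tt/2)) by (apply sin_gt_0; lra).
  assert (hc : 1 - cos tt = 2 * sin (tt/2) ^ 2).
  { replace tt with (2 * (tt / 2)) at 1 by field. rewrite cos_2a_sin. ring. }
  assert (hc' : 0 < 1 - cos tt) by nra.
  assert (hx : 0 < tt - sin tt) by (pose proof (sin_lt_x tt ltac:(lra)); lra).
  split.
  - rewrite Hk. apply Rdiv_lt_0_compat; lra.
  - unfold alpha in Ha. unfold Xf. rewrite Hk.
    assert (E : b * (1 - cos tt) = beta * (tt - sin tt)).
    { apply (f_equal (fun z => z * b * (tt - sin tt))) in Ha.
      replace ((1 - cos tt) / (tt - sin tt) * b * (tt - sin tt)) with (b * (1 - cos tt)) in Ha by (field; lra).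
      rewrite Ha. field. lra. }
    replace (2 * beta / (1 - cos tt) / 2 * (tt - sin tt)) with (beta * (tt - sin tt) / (1 - cos tt)) by (field; lra).
    rewrite <- E. field. lra.
Qed.

Lemma theta_b k tt b : 0 < k -> Xf k tt = b -> theta k b = tt.
Proof. intros hk <-. apply theta_Xf; auto. Qed.

Lemma theta_range k tt b t : 0 < k -> Xf k tt = b -> 0 <= t <= b -> 0 <= theta k t <= tt.
Proof.
  intros hk hb ht. rewrite <- (theta_0 k hk), <- (theta_b k tt b hk hb).
  split; apply theta_le; lra.
Qed.

Lemma good_0b k tt b t : 0 < k -> 0 < tt < 2*PI -> Xf k tt = b -> 0 < t <= b -> good k t.
Proof.
  intros hk htt hb ht. split.
  - rewrite <- (theta_0 k hk). apply theta_lt; lra.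
  - pose proof (theta_range k tt b t hk hb ltac:(lra)). lra.
Qed.

Lemma d0_eq k tt b (gamma0 : R -> R) t : 0 < k -> 0 < tt < 2*PI -> Xf k tt = b ->
  (forall th, 0 <= th <= tt -> gamma0 (k / 2 * (th - sin th)) = k / 2 * (1 - cos th)) ->
  0 <= t <= b -> sqrt (2 * gamma0 t) = Gf k t.
Proof.
  intros hk htt hb Hg ht. pose proof (theta_range k tt b t hk hb ht) as hr.
  rewrite <- (Xf_theta k t hk) at 1. unfold Xf. rewrite Hg; auto.
  rewrite one_m_cos. unfold Gf.
  assert (0 <= ss k t) by (unfold ss; apply sin_ge_0; lra).
  replace (2 * (k / 2 * (2 * ss k t ^ 2))) with ((mm k * ss k t) ^ 2).
  - apply sqrt_pow2. pose proof (mm_pos k hk). nra.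
  - rewrite Rpow_mult_distr, mm_sq; auto. field.
Qed.

Lemma Gf_pos k tt b t : 0 < k -> 0 < tt < 2*PI -> Xf k tt = b -> 0 < t <= b -> 0 < Gf k t.
Proof.
  intros. unfold Gf. apply Rmult_lt_0_compat. apply mm_pos; auto.
  apply ss_pos. eapply good_0b; eauto.
Qed.

Lemma W_eq k tt b : 0 < k -> Xf k tt = b ->
  2 * b / mm k + cc k b * Gf k b = mm k / 2 * tt.
Proof.
  intros hk hb. pose proof (mm_pos k hk). pose proof (mm_sq k hk).
  unfold Gf, cc, ss. rewrite (theta_b k tt b hk hb). rewrite <- hb. unfold Xf.
  replace (sin tt) with (sin (2 * (tt/2))) by (f_equal; field). rewrite sin_2a.
  replace (2 * (tt / 2)) with tt by field.
  assert (Ek : k = mm k ^2/2) by lra.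
  set (m := mm k) in *. clearbody m. rewrite Ek. field. lra.
Qed.


Lemma d0_loc k tt b (gamma0 : R -> R) t : 0 < k -> 0 < tt < 2*PI -> Xf k tt = b ->
  (forall th, 0 <= th <= tt -> gamma0 (k / 2 * (th - sin th)) = k / 2 * (1 - cos th)) ->
  0 < t < b -> locally t (fun x => Gf k x = sqrt (2 * gamma0 x)).
Proof.
  intros hk htt hb Hg ht. generalize (loc_interval 0 b t ht). apply filter_imp.
  intros x Hx. symmetry. apply (d0_eq k tt b); auto; lra.
Qed.

Lemma d0_deriv k tt b (gamma0 : R -> R) t : 0 < k -> 0 < tt < 2*PI -> Xf k tt = b ->
  (forall th, 0 <= th <= tt -> gamma0 (k / 2 * (th - sin th)) = k / 2 * (1 - cos th)) ->
  0 < t < b -> is_derive (fun x => sqrt (2 * gamma0 x)) t (dG k t).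
Proof.
  intros hk htt hb Hg ht. apply (is_derive_ext_loc (Gf k)).
  apply (d0_loc k tt b); auto. apply Gf_deriv; auto. apply (good_0b k tt b); auto; lra.
Qed.

Lemma d0_integrand k tt b (gamma0 : R -> R) t : 0 < k -> 0 < tt < 2*PI -> Xf k tt = b ->
  (forall th, 0 <= th <= tt -> gamma0 (k / 2 * (th - sin th)) = k / 2 * (1 - cos th)) ->
  0 < t < b -> M_integrand (fun x => sqrt (2 * gamma0 x)) t = mm k / 2 * dth k t.
Proof.
  intros hk htt hb Hg ht. pose proof (good_0b k tt b t hk htt hb ltac:(lra)) as hg.
  pose proof (ss_pos k t hg). pose proof (mm_pos k hk). pose proof (mm_sq k hk).
  unfold M_integrand.
  replace (Derive (fun x : R => sqrt (2 * gamma0 x)) t) with (dG k t)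
    by (symmetry; apply is_derive_unique; apply (d0_deriv k tt b gamma0 t hk htt hb Hg ht)).
  rewrite (d0_eq k tt b gamma0 t hk htt hb Hg ltac:(lra)).
  rewrite (key_eq (Gf k t) (dG k t) (ss k t) (cc k t) (mm k)); auto.
  - unfold dth. assert (Ek : k = mm k ^2/2) by lra.
    set (m := mm k) in *. set (s := ss k t) in *. clearbody m s. rewrite Ek. field. lra.
  - apply ss_cc.
Qed.

Lemma d0_int k tt b (gamma0 : R -> R) eps : 0 < k -> 0 < tt < 2*PI -> Xf k tt = b ->
  (forall th, 0 <= th <= tt -> gamma0 (k / 2 * (th - sin th)) = k / 2 * (1 - cos th)) ->
  0 < eps < b ->
  is_RInt (M_integrand (fun x => sqrt (2 * gamma0 x))) eps b (mm k / 2 * tt - mm k / 2 * theta k eps).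
Proof.
  intros hk htt hb Hg he.
  apply (is_RInt_ext (fun t => mm k / 2 * dth k t)).
  - rewrite Rmin_left, Rmax_right; try lra. intros x Hx. symmetry. apply (d0_integrand k tt b); auto. lra.
  - rewrite <- (theta_b k tt b hk hb).
    apply (is_RInt_derive (V:=R_CompleteNormedModule) (fun t => mm k / 2 * theta k t)).
    + rewrite Rmin_left, Rmax_right; try lra. intros x Hx.
      apply is_derive_scal. apply theta_deriv'; auto. apply (good_0b k tt b); auto; lra.
    + rewrite Rmin_left, Rmax_right; try lra. intros x Hx.
      apply (continuous_mult (K:=R_AbsRing) (fun _ => mm k / 2) (dth k)). apply continuous_const.
      apply dth_cont; auto. apply (good_0b k tt b); auto; lra.
Qed.

Lemma d0_gen k tt b (gamma0 : R -> R) : 0 < k -> 0 < tt < 2*PI -> Xf k tt = b ->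
  (forall th, 0 <= th <= tt -> gamma0 (k / 2 * (th - sin th)) = k / 2 * (1 - cos th)) ->
  is_RInt_gen (M_integrand (fun x => sqrt (2 * gamma0 x))) (at_right 0) (at_point b) (mm k / 2 * tt).
Proof.
  intros hk htt hb Hg.
  assert (hb0 : 0 < b). { rewrite <- hb. replace 0 with (Xf k 0) by (unfold Xf; rewrite sin_0; ring). apply Xf_incr; lra. }
  apply (gen_eval _ b (fun e => mm k / 2 * tt - mm k / 2 * theta k e)); auto.
  - intros. apply (d0_int k tt b); auto.
  - assert (L : filterlim (fun e => mm k / 2 * tt + - (mm k / 2 * theta k e)) (at_right 0)
       (locally (mm k / 2 * tt + - (mm k / 2 * theta k 0)))).
    2: { rewrite theta_0, Rmult_0_r, Ropp_0, Rplus_0_r in L; auto. }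
    apply (lim_plus (at_right 0) (fun _ => mm k / 2 * tt) (fun e => - (mm k / 2 * theta k e))).
    apply filterlim_const.
    apply (filterlim_comp _ _ _ (fun e => mm k / 2 * theta k e) Ropp (at_right 0) (locally (mm k / 2 * theta k 0))).
    eapply filterlim_filter_le_1. apply filter_le_within.
    apply (continuous_mult (K:=R_AbsRing) (fun _ => mm k / 2) (theta k)). apply continuous_const.
    apply theta_continuous; auto.
    apply (filterlim_opp (V:=R_NormedModule)).
Qed.


Lemma b_pos k tt b : 0 < k -> 0 < tt -> Xf k tt = b -> 0 < b.
Proof. intros hk ht hb. rewrite <- hb. replace 0 with (Xf k 0) by (unfold Xf; rewrite sin_0; ring). apply Xf_incr; lra. Qed.

Lemma leftq k tt b (gamma0 : R -> R) : 0 < k -> 0 < tt < 2*PI -> Xf k tt = b ->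
  (forall th, 0 <= th <= tt -> gamma0 (k / 2 * (th - sin th)) = k / 2 * (1 - cos th)) ->
  filterlim (fun h => (sqrt (2 * gamma0 (b + h)) - sqrt (2 * gamma0 b)) / h) (at_left 0) (locally (dG k b)).
Proof.
  intros hk htt hb Hg. pose proof (b_pos k tt b hk ltac:(lra) hb) as hb0.
  pose proof (Gf_deriv k b hk (good_0b k tt b b hk htt hb ltac:(lra))) as D.
  apply is_derive_Reals in D.
  apply filterlim_locally. intros eps.
  destruct (D eps (cond_pos eps)) as [del Hd].
  assert (hp : 0 < Rmin del b) by (apply Rmin_glb_lt; [apply cond_pos | lra]).
  exists (mkposreal _ hp). intros y Hy Hneg. apply ball_R2 in Hy. cbn [pos] in Hy.
  pose proof (Rmin_l del b). pose proof (Rmin_r del b).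
  apply ball_R3.
  rewrite (d0_eq k tt b gamma0 (b + y)); auto; try (destruct Hy; lra).
  rewrite (d0_eq k tt b gamma0 b); auto; try lra.
  apply Hd. lra. apply Rabs_def1; destruct Hy; lra.
Qed.

Lemma d0_inY b beta tt k (gamma0 : R -> R) : 0 < beta -> 0 < k -> 0 < tt < 2*PI -> Xf k tt = b ->
  k = 2 * beta / (1 - cos tt) ->
  (forall th, 0 <= th <= tt -> gamma0 (k / 2 * (th - sin th)) = k / 2 * (1 - cos th)) ->
  inY b beta (fun t => sqrt (2 * gamma0 t)).
Proof.
  intros hbe hk htt hb Hk Hg. pose proof (b_pos k tt b hk ltac:(lra) hb) as hb0.
  split; [| split; [| split; [| split; [| split]]]].
  - intros t ht. rewrite (d0_eq k tt b gamma0 t); auto.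
    apply (filterlim_within_ext _ (Gf k)).
    + intros x Hx. symmetry. apply (d0_eq k tt b); auto.
    + apply cont_within. apply Gf_cont_all; auto.
  - exists (dG k). split; [| split].
    + intros t ht. apply (d0_deriv k tt b); auto.
    + apply (leftq k tt b); auto.
    + intros t ht. apply cont_within. apply dG_cont; auto. apply (good_0b k tt b); auto.
  - intros t ht. rewrite (d0_eq k tt b gamma0 t); auto; try lra. apply (Gf_pos k tt b); auto.
  - rewrite (d0_eq k tt b gamma0 0); auto; try lra. unfold Gf, ss. rewrite theta_0; auto.
    replace (0/2) with 0 by field. rewrite sin_0. ring.
  - rewrite <- hb at 1. unfold Xf. rewrite Hg; try lra. f_equal. rewrite Hk.
    assert (0 < 1 - cos tt).
    { rewrite <- (theta_b k tt b hk hb). rewrite one_m_cos.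
      pose proof (ss_pos k b (good_0b k tt b b hk htt hb ltac:(lra))). nra. }
    field. lra.
  - exists (mm k / 2 * tt). apply (d0_gen k tt b); auto.
Qed.


Lemma comp_Hyp b beta tt k delta : 0 < k -> 0 < tt < 2*PI -> Xf k tt = b ->
  inY b beta delta -> exists d, CHyp k b delta d.
Proof.
  intros hk htt hb [Hc [[d [HD [_ Hdc]]] [Hp _]]].
  pose proof (b_pos k tt b hk ltac:(lra) hb) as hb0.
  exists d. split; [auto | split; [auto | split]].
  - intros t ht. apply (good_0b k tt b); auto.
  - intros t ht. split; [auto | split].
    + apply (within_cont (fun x => 0 < x <= b)). generalize (loc_interval 0 b t ht).
      apply filter_imp. intros; lra. apply Hdc; lra.
    + apply Hp; lra.
Qed.

Lemma gen_of_M b delta : M_defined b delta ->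
  is_RInt_gen (M_integrand delta) (at_right 0) (at_point b) (M b delta).
Proof.
  intros H. unfold M. apply (RInt_gen_correct (V:=R_CompleteNormedModule)); auto.
Qed.

Lemma gap_cont k (delta : R -> R) t l : 0 < k -> good k t -> 0 < delta t -> is_derive delta t l ->
  continuous (gap k delta) t.
Proof.
  intros hk hg hp HD. pose proof (ss_pos k t hg). pose proof (mm_pos k hk).
  apply (continuous_ext (fun x => (Gf k x + - delta x) * (Gf k x + - delta x) * / (delta x * mm k * Gf k x))).
  - intros x. unfold gap, Gf, Rdiv. f_equal. ring. f_equal. ring.
  - pose proof (delta_cont delta t l HD) as Cd. pose proof (Gf_cont_all k t hk) as CG.
    assert (Cm : continuous (fun x => Gf k x + - delta x) t).
    { apply (continuous_plus (V:=R_NormedModule) (Gf k) (fun x => - delta x)); auto.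
      apply (continuous_opp (V:=R_NormedModule) delta); auto. }
    apply (continuous_mult (K:=R_AbsRing) (fun x => (Gf k x + - delta x) * (Gf k x + - delta x))
       (fun x => / (delta x * mm k * Gf k x))).
    apply (continuous_mult (K:=R_AbsRing)); auto.
    apply continuous_Rinv_comp.
    apply (continuous_mult (K:=R_AbsRing) (fun x => delta x * mm k) (Gf k)); auto.
    apply (continuous_mult (K:=R_AbsRing) delta (fun _ => mm k)); auto. apply continuous_const.
    unfold Gf. apply Rgt_not_eq. repeat apply Rmult_lt_0_compat; auto.
Qed.

Lemma gap_pos k (delta : R -> R) t : 0 < k -> good k t -> 0 < delta t -> delta t <> Gf k t ->
  0 < gap k delta t.
Proof.
  intros hk hg hp hn. pose proof (ss_pos k t hg). pose proof (mm_pos k hk). unfold gap.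
  apply Rdiv_lt_0_compat.
  - unfold Gf in hn. assert (mm k * ss k t - delta t <> 0) by lra. apply pow2_gt_0; auto.
  - apply Rmult_lt_0_compat; [apply Rmult_lt_0_compat; [auto | apply pow_lt; auto] | auto].
Qed.

Theorem proposition4 (b beta th_t k : R) (gamma0 : R -> R) :
  0 < b -> 0 < beta ->
  0 < th_t < 2 * PI -> alpha th_t = beta / b ->
  k = 2 * beta / (1 - cos th_t) ->
  (forall th, 0 <= th <= th_t ->
     gamma0 (k / 2 * (th - sin th)) = k / 2 * (1 - cos th)) ->
  let delta0 := fun t => sqrt (2 * gamma0 t) in
  inY b beta delta0 /\
  (forall delta, inY b beta delta -> M b delta0 <= M b delta) /\
  (forall delta, inY b beta delta -> M b delta = M b delta0 ->
     forall t, 0 <= t <= b -> delta t = delta0 t).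
Proof.
  intros hb hbe htt Ha Hk Hg delta0.
  destruct (setup b beta th_t k hb hbe htt Ha Hk) as [hk hX].
  assert (HY0 : inY b beta delta0) by (apply (d0_inY b beta th_t k gamma0); auto).
  assert (M0 : M b delta0 = mm k / 2 * th_t).
  { unfold M. apply (is_RInt_gen_unique (V:=R_CompleteNormedModule)). apply (d0_gen k th_t b); auto. }
  assert (Hd0b : delta0 b = sqrt (2 * beta)) by (apply HY0).
  assert (Hd0G : forall t, 0 <= t <= b -> delta0 t = Gf k t).
  { intros t ht. apply (d0_eq k th_t b); auto. }
  assert (PW : forall delta, inY b beta delta -> Pf k delta b = mm k / 2 * th_t).
  { intros delta HY. unfold Pf. destruct HY as [_ [_ [_ [_ [Hb _]]]]].
    rewrite Hb, <- Hd0b, Hd0G by lra. apply W_eq; auto. }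
  assert (LB : forall delta, inY b beta delta -> forall a1 a2 eta,
     0 < a1 -> a1 <= a2 -> a2 < b -> 0 <= eta ->
     (forall x, a1 < x < a2 -> eta <= gap k delta x) ->
     mm k / 2 * th_t + eta * (a2 - a1) <= M b delta).
  { intros delta HY a1 a2 eta h1 h2 h3 he Hgap.
    destruct (comp_Hyp b beta th_t k delta hk htt hX HY) as [d HH].
    rewrite <- (PW delta HY).
    pose proof HY as [Hc [_ [_ [H0 [_ HM]]]]].
    apply (main_lb k b delta d) with (a1 := a1) (a2 := a2); auto.
    - apply Hc; lra.
    - pose proof (Hc 0 ltac:(lra)) as C0. rewrite H0 in C0. exact C0.
    - apply gen_of_M; auto. }
  split; [exact HY0 | split].
  - intros delta HY. rewrite M0.
    pose proof (LB delta HY (b/2) (b/2) 0 ltac:(lra) ltac:(lra) ltac:(lra) ltac:(lra)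
      ltac:(intros; lra)). lra.
  - intros delta HY HM t ht.
    destruct (Req_dec t 0) as [->|Ht0].
    { destruct HY as [_ [_ [_ [H0 _]]]]. rewrite H0. destruct HY0 as [_ [_ [_ [H0' _]]]]. auto. }
    destruct (Req_dec t b) as [->|Htb].
    { destruct HY as [_ [_ [_ [_ [Hb _]]]]]. rewrite Hb. auto. }
    assert (ht' : 0 < t < b) by lra.
    rewrite Hd0G by lra.
    destruct (Req_dec (delta t) (Gf k t)) as [E|E]; auto. exfalso.
    destruct (comp_Hyp b beta th_t k delta hk htt hX HY) as [d HH].
    pose proof HH as [_ [_ [Hgood Hd]]].
    destruct (Hd t ht') as [HD [_ Hp]].
    assert (hg : good k t) by (apply Hgood; lra).
    pose proof (gap_pos k delta t hk hg Hp E) as Gp.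
    destruct (cont_eps (gap k delta) t (gap_cont k delta t (d t) hk hg Hp HD) (gap k delta t / 2) ltac:(lra))
      as [r [hr Hr]].
    set (rho := Rmin r (Rmin t (b - t)) / 2).
    assert (hrho : 0 < rho /\ rho < r /\ rho < t /\ rho < b - t).
    { unfold rho. pose proof (Rmin_l r (Rmin t (b-t))). pose proof (Rmin_r r (Rmin t (b-t))).
      pose proof (Rmin_l t (b-t)). pose proof (Rmin_r t (b-t)).
      assert (0 < Rmin r (Rmin t (b - t))) by (repeat apply Rmin_glb_lt; lra). lra. }
    pose proof (LB delta HY (t - rho) (t + rho) (gap k delta t / 2) ltac:(lra) ltac:(lra) ltac:(lra) ltac:(lra)) as L.
    assert (L2 : mm k / 2 * th_t + gap k delta t / 2 * (t + rho - (t - rho)) <= M b delta).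
    { apply L. intros x Hx. assert (Rabs (x - t) < r) by (apply Rabs_def1; lra).
      specialize (Hr x H). apply Rabs_def2 in Hr. lra. }
    rewrite HM, M0 in L2. nra.
Qed.
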